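(* Let $X$ be a complete CAT(0)-space. Then every isometry $T$ of $X$ fixes a point of the metric compactification $\overline{X}$, i.e. there is $h\in\overline{X}$ with $Th=h$. If moreover $X$ is proper, every isometry of $X$ fixes a point of the visual compactification of $X$.
   Context: Fix a base point $x_0\in X$. Let $\mathrm{Hom}(X,\mathbb{R})$ be the set of $1$-Lipschitz functions $X\to\mathbb{R}$ with the topology of pointwise convergence, and for $y\in X$ let $h_y(\cdot)=d(\cdot,y)-d(x_0,y)$. The metric compactification $\overline{X}$ is the closure of $\{h_y:y\in X\}$ in $\mathrm{Hom}(X,\mathbb{R})$; its elements are metric functionals. An isometry (surjective distance-preserving map) $T$ acts on $\overline{X}$ by $(Th)(x)=h(T^{-1}x)-h(T^{-1}x_0)$. A metric space is proper if closed bounded sets are compact. The visual compactification of a proper CAT(0)-space is $X\cup\partial X$, where $\partial X$ is the set of equivalence classes of geodesic rays (two rays equivalent if at bounded distance), with the cone topology; isometries act on it naturally. *)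

(* Defs.v *)
From Stdlib Require Export Reals List ClassicalEpsilon.
Open Scope R_scope.

Section MetricDefs.
Context {X : Type}.

Record is_metric (d : X -> X -> R) : Prop := {
  d_eq0 : forall x y, d x y = 0 <-> x = y;
  d_sym : forall x y, d x y = d y x;
  d_tri : forall x y z, d x z <= d x y + d y z }.

Definition cauchy_seq (d : X -> X -> R) (u : nat -> X) : Prop :=
  forall eps, 0 < eps -> exists N, forall m n, (N <= m)%nat -> (N <= n)%nat ->
    d (u m) (u n) < eps.

Definition complete (d : X -> X -> R) : Prop :=
  forall u, cauchy_seq d u -> exists l, forall eps, 0 < eps ->
    exists N, forall n, (N <= n)%nat -> d (u n) l < eps.

Definition is_geodesic (d : X -> X -> R) (x y : X) (c : R -> X) : Prop :=
  c 0 = x /\ c (d x y) = y /\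
  forall s t, 0 <= s <= d x y -> 0 <= t <= d x y -> d (c s) (c t) = Rabs (s - t).

Definition geodesic_space (d : X -> X -> R) : Prop :=
  forall x y, exists c, is_geodesic d x y c.

Definition eucl (p q : R * R) : R :=
  sqrt ((fst p - fst q) ^ 2 + (snd p - snd q) ^ 2).
Definition scal (a : R) (p : R * R) : R * R := (a * fst p, a * snd p).

(* CAT(0): geodesic, and for every geodesic triangle with vertices x,y,z
   (sides c1 from x to y, c2 from x to z), every comparison triangle
   (0, ybar, zbar) in R^2 and points p = c1 s, q = c2 t, one has
   d(p,q) <= |pbar - qbar|, pbar, qbar the comparison points. *)
Definition CAT0 (d : X -> X -> R) : Prop :=
  geodesic_space d /\
  forall x y z c1 c2 (ybar zbar : R * R),
    is_geodesic d x y c1 -> is_geodesic d x z c2 ->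
    eucl (0, 0) ybar = d x y -> eucl (0, 0) zbar = d x z -> eucl ybar zbar = d y z ->
    forall s t, 0 <= s <= d x y -> 0 <= t <= d x z ->
      d (c1 s) (c2 t) <= eucl (scal (s / d x y) ybar) (scal (t / d x z) zbar).

Definition is_open (d : X -> X -> R) (U : X -> Prop) : Prop :=
  forall x, U x -> exists r, 0 < r /\ forall y, d x y < r -> U y.
Definition is_closed (d : X -> X -> R) (K : X -> Prop) : Prop :=
  is_open d (fun x => ~ K x).
Definition is_bounded (d : X -> X -> R) (K : X -> Prop) : Prop :=
  exists x r, forall y, K y -> d x y <= r.
Definition is_compact (d : X -> X -> R) (K : X -> Prop) : Prop :=
  forall (I : Type) (U : I -> X -> Prop),
    (forall i, is_open d (U i)) -> (forall x, K x -> exists i, U i x) ->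
    exists l : list I, forall x, K x -> exists i, In i l /\ U i x.
Definition proper (d : X -> X -> R) : Prop :=
  forall K, is_closed d K -> is_bounded d K -> is_compact d K.

Definition lip1 (d : X -> X -> R) (h : X -> R) : Prop :=
  forall x y, Rabs (h x - h y) <= d x y.
Definition hfun (d : X -> X -> R) (x0 y : X) : X -> R :=
  fun x => d x y - d x0 y.
(* h is in the closure of {h_y} in Hom(X,R) for pointwise convergence *)
Definition in_metric_compactification (d : X -> X -> R) (x0 : X) (h : X -> R) : Prop :=
  lip1 d h /\
  forall (F : list X) eps, 0 < eps ->
    exists y, forall x, In x F -> Rabs (h x - hfun d x0 y x) < eps.

Definition is_isometry (d : X -> X -> R) (T : X -> X) : Prop :=
  (forall x y, d (T x) (T y) = d x y) /\ (forall y, exists x, T x = y).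

Definition finv (T : X -> X) (x : X) : X :=
  epsilon (inhabits x) (fun y => T y = x).

Definition act (x0 : X) (T : X -> X) (h : X -> R) : X -> R :=
  fun x => h (finv T x) - h (finv T x0).

Definition geodesic_ray (d : X -> X -> R) (g : R -> X) : Prop :=
  forall s t, 0 <= s -> 0 <= t -> d (g s) (g t) = Rabs (s - t).

(* T fixes a point of X, or fixes a boundary point [g]: T∘g ~ g *)
Definition fixes_visual_point (d : X -> X -> R) (T : X -> X) : Prop :=
  (exists x, T x = x) \/
  (exists g, geodesic_ray d g /\
     exists C, forall t, 0 <= t -> d (T (g t)) (g t) <= C).

End MetricDefs.

(* Main.v *)
Require Import Defs.
From Stdlib Require Import Lra Psatz Classical FunctionalExtensionality.

Section Geo.
Context {X : Type} (d : X -> X -> R) (Hm : is_metric d).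

Lemma dxx x : d x x = 0.
Proof. apply (d_eq0 _ Hm). reflexivity. Qed.
Lemma dpos x y : 0 <= d x y.
Proof. pose proof (d_tri _ Hm x y x). rewrite dxx, (d_sym _ Hm y x) in H. lra. Qed.
Lemma dsym x y : d x y = d y x.
Proof. apply (d_sym _ Hm). Qed.
Lemma dtri x y z : d x z <= d x y + d y z.
Proof. apply (d_tri _ Hm). Qed.
Lemma d0eq x y : d x y = 0 -> x = y.
Proof. apply (d_eq0 _ Hm). Qed.

Lemma sqrt_sq_eq a : 0 <= a -> sqrt (a ^ 2) = a.
Proof. intros. rewrite <- Rsqr_pow2. apply sqrt_Rsqr; auto. Qed.

Lemma cos_lemma (HC : CAT0 d) p a b c1 c2 s t :
  is_geodesic d p a c1 -> is_geodesic d p b c2 -> 0 < d p a -> 0 < d p b ->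
  0 <= s <= d p a -> 0 <= t <= d p b ->
  (d (c1 s) (c2 t)) ^ 2 <= s ^ 2 + t ^ 2 -
     s * t * ((d p a) ^ 2 + (d p b) ^ 2 - (d a b) ^ 2) / (d p a * d p b).
Proof.
  intros G1 G2 HA HB Hs Ht.
  set (A := d p a) in *. set (B := d p b) in *. set (C := d a b).
  assert (T1 : C <= A + B) by (unfold C, A, B; rewrite (dsym p a); apply dtri).
  assert (T2 : A <= B + C) by (unfold C, A, B; rewrite (dsym a b); apply dtri).
  assert (T3 : B <= A + C) by (unfold C, A, B; apply dtri).
  assert (HC0 : 0 <= C) by apply dpos.
  set (u := (A ^ 2 + B ^ 2 - C ^ 2) / (2 * A)).
  assert (Hu : u ^ 2 <= B ^ 2).
  { unfold u. apply Rmult_le_reg_r with ((2*A)^2). nra.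
    replace (((A ^ 2 + B ^ 2 - C ^ 2) / (2 * A)) ^ 2 * (2 * A) ^ 2) with ((A ^ 2 + B ^ 2 - C ^ 2)^2) by (field; lra).
    assert (0 <= C^2 - (A-B)^2) by nra. assert (0 <= (A+B)^2 - C^2) by nra.
    nra. }
  set (v := sqrt (B ^ 2 - u ^ 2)).
  assert (Hv : v ^ 2 = B ^ 2 - u ^ 2).
  { unfold v. rewrite <- Rsqr_pow2. apply Rsqr_sqrt. lra. }
  destruct HC as [_ HC].
  assert (E1 : eucl (0, 0) (A, 0) = A).
  { unfold eucl; cbn [fst snd]. replace ((0 - A) ^ 2 + (0 - 0) ^ 2) with (A ^ 2) by ring. apply sqrt_sq_eq; lra. }
  assert (E2 : eucl (0, 0) (u, v) = B).
  { unfold eucl; cbn [fst snd]. replace ((0 - u) ^ 2 + (0 - v) ^ 2) with (B ^ 2) by (rewrite <- (Rsqr_pow2 (0 - v)), Rsqr_neg_minus, Rsqr_pow2; rewrite Rminus_0_r, Hv; ring). apply sqrt_sq_eq; lra. }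
  assert (E3 : eucl (A, 0) (u, v) = C).
  { unfold eucl; cbn [fst snd]. replace ((A - u) ^ 2 + (0 - v) ^ 2) with (C ^ 2).
    apply sqrt_sq_eq; lra.
    replace ((0 - v) ^ 2) with (v ^ 2) by ring. rewrite Hv. unfold u. field. lra. }
  pose proof (HC p a b c1 c2 (A, 0) (u, v) G1 G2 E1 E2 E3 s t Hs Ht) as H.
  unfold eucl, scal in H; cbn [fst snd] in H.
  set (R2 := (s / A * A - t / B * u) ^ 2 + (s / A * 0 - t / B * v) ^ 2) in H.
  assert (ER : R2 = s ^ 2 + t ^ 2 - s * t * (A ^ 2 + B ^ 2 - C ^ 2) / (A * B)).
  { unfold R2. replace ((s / A * 0 - t / B * v) ^ 2) with (t^2/B^2 * v^2) by (field; lra).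
    rewrite Hv. unfold u. field. lra. }
  rewrite <- ER.
  assert (0 <= R2) by (unfold R2; apply Rplus_le_le_0_compat; apply pow2_ge_0).
  assert (0 <= d (c1 s) (c2 t)) by apply dpos.
  assert (H2 : sqrt R2 ^ 2 = R2) by (rewrite <- Rsqr_pow2; apply Rsqr_sqrt; auto).
  assert (0 <= sqrt R2) by apply sqrt_pos.
  assert (Hd : d (c1 s) (c2 t) <= sqrt R2) by exact H. rewrite <- H2. apply pow_incr. lra.
Qed.

Lemma geo_dist x y c s : is_geodesic d x y c -> 0 <= s <= d x y -> d x (c s) = s.
Proof.
  intros [H0 [H1 H2]] Hs. rewrite <- H0 at 1. rewrite H2; try lra.
  rewrite Rabs_left1; lra.
Qed.

Lemma rev_geo x y c : is_geodesic d x y c -> is_geodesic d y x (fun s => c (d x y - s)).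
Proof.
  intros [H0 [H1 H2]]. split; [|split].
  - rewrite Rminus_0_r. auto.
  - rewrite (dsym y x). rewrite Rminus_diag. auto.
  - intros s t Hs Ht. rewrite (dsym y x) in Hs, Ht. rewrite H2 by lra.
    replace (d x y - s - (d x y - t)) with (-(s - t)) by ring. apply Rabs_Ropp.
Qed.

Lemma restrict_geo x y c m : is_geodesic d x y c -> 0 <= m <= d x y -> is_geodesic d x (c m) c.
Proof.
  intros G Hm'. pose proof (geo_dist _ _ _ _ G Hm') as E.
  destruct G as [H0 [H1 H2]]. split; [|split]; rewrite ?E; auto.
  intros s t Hs Ht. apply H2; lra.
Qed.

Lemma iso_geo (T : X -> X) x y c : (forall x y, d (T x) (T y) = d x y) ->
  is_geodesic d x y c -> is_geodesic d (T x) (T y) (fun s => T (c s)).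
Proof.
  intros HT [H0 [H1 H2]]. unfold is_geodesic. rewrite HT. split; [|split].
  - rewrite H0; auto. - rewrite H1; auto.
  - intros. rewrite HT. auto.
Qed.

Lemma le_sq_le x y : 0 <= x -> 0 <= y -> x ^ 2 <= y ^ 2 -> x <= y.
Proof. intros. nra. Qed.

Lemma convex (HC : CAT0 d) p a b c1 c2 al :
  is_geodesic d p a c1 -> is_geodesic d p b c2 -> 0 <= al <= 1 ->
  d (c1 (al * d p a)) (c2 (al * d p b)) <= al * d a b.
Proof.
  intros G1 G2 Hal.
  pose proof (dpos p a). pose proof (dpos p b).
  destruct (Req_dec (d p a) 0) as [EA|EA].
  - rewrite EA, Rmult_0_r. destruct G1 as [G10 _]. rewrite G10.
    rewrite (geo_dist _ _ _ _ G2) by nra.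
    apply d0eq in EA. subst a. right; reflexivity.
  - destruct (Req_dec (d p b) 0) as [EB|EB].
    + rewrite EB, Rmult_0_r. destruct G2 as [G20 _]. rewrite G20.
      rewrite dsym, (geo_dist _ _ _ _ G1) by nra.
      apply d0eq in EB. subst b. rewrite dsym. right; reflexivity.
    + pose proof (cos_lemma HC p a b c1 c2 (al * d p a) (al * d p b) G1 G2) as Hc.
      assert (H' : d (c1 (al * d p a)) (c2 (al * d p b)) ^ 2 <= (al * d a b) ^ 2).
      { eapply Rle_trans. apply Hc; nra. right. field. lra. }
      apply le_sq_le; auto. apply dpos. pose proof (dpos a b). nra.
Qed.

Lemma e_lemma (HC : CAT0 d) x0 q c z dl : is_geodesic d x0 q c -> 0 < d x0 q ->
  0 <= dl <= d x0 q -> dl <= 2 * (d x0 q - d z x0) ->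
  (dl + d z (c (d x0 q - dl)) - d z q) * (2 * d x0 q + 2 * d z x0 + dl)
    <= dl * (4 * d z x0 + 2 * dl).
Proof.
  intros G HL Hdl Hreg.
  set (L := d x0 q) in *. set (a := d z x0) in *. set (b := d z q).
  set (w := d z (c (L - dl))).
  pose proof (rev_geo _ _ _ G) as RG. fold L in RG.
  assert (Hw0 : 0 <= w) by apply dpos. assert (Hb0 : 0 <= b) by apply dpos.
  assert (Ha0 : 0 <= a) by apply dpos.
  assert (Dq : d q (c (L - dl)) = dl).
  { pose proof (geo_dist _ _ _ dl RG) as E. rewrite (dsym q x0) in E. apply E. fold L. lra. }
  assert (Hwb : w <= b + dl). { pose proof (dtri z q (c (L - dl))) as T0. rewrite Dq in T0. exact T0. }
  assert (Hbl : L <= a + b). { unfold L, a, b. rewrite (dsym z x0). apply dtri. }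
  assert (Hba : b <= L + a). { unfold L, a, b. rewrite (dsym x0 q). rewrite (dsym z q), (dsym z x0). apply dtri. }
  assert (Hw2 : w ^ 2 <= dl ^ 2 + b ^ 2 - dl * (L ^ 2 + b ^ 2 - a ^ 2) / L).
  { destruct (Req_dec b 0) as [Eb|Eb].
    - unfold b in Eb. apply d0eq in Eb. subst z.
      assert (a = L) by (unfold a, L; apply dsym). rewrite H.
      unfold w. rewrite Dq. unfold b. rewrite dxx. right. field. lra.
    - destruct HC as [HG HC']. destruct (HG q z) as [g Gg].
      pose proof (cos_lemma (conj HG HC') q x0 z _ g dl (d q z) RG Gg) as Hc.
      rewrite (dsym q x0) in Hc. fold L in Hc. rewrite (dsym q z) in Hc. fold b in Hc.
      rewrite (dsym x0 z) in Hc. fold a in Hc.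
      destruct Gg as [_ [Gz _]]. rewrite (dsym q z) in Gz. fold b in Gz. rewrite Gz in Hc.
      unfold w. rewrite dsym.
      eapply Rle_trans. apply Hc; lra.
      right. field. lra. }
  assert (Hk : dl * (L ^ 2 + b ^ 2 - a ^ 2) / L >= 2 * dl * (L - a)).
  { assert (b ^ 2 >= (L - a) ^ 2) by nra.
    apply Rle_ge. apply Rmult_le_reg_r with L; auto.
    replace (dl * (L ^ 2 + b ^ 2 - a ^ 2) / L * L) with (dl * (L ^ 2 + b ^ 2 - a ^ 2)) by (field; lra).
    nra. }
  assert (W : w ^ 2 - b ^ 2 <= dl ^ 2 - 2 * dl * (L - a)) by lra.
  assert (Wb : w <= b) by (apply le_sq_le; nra).
  assert ((w - b) * (2 * L + 2 * a + dl) <= (w - b) * (w + b)) by nra.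
  nra.
Qed.
End Geo.

Record isUF (U : (nat -> Prop) -> Prop) : Prop := {
 uI : forall A B, U A -> U B -> U (fun k => A k /\ B k);
 uS : forall A B : nat -> Prop, (forall k, A k -> B k) -> U A -> U B;
 u0 : ~ U (fun _ => False);
 uC : forall A, U A \/ U (fun k => ~ A k);
 uN : forall N, U (fun k => (N <= k)%nat) }.

Lemma abs_le_b x b : Rabs x <= b -> -b <= x <= b.
Proof. unfold Rabs; destruct (Rcase_abs x); lra. Qed.

Section UF.
Context (U : (nat -> Prop) -> Prop) (HU : isUF U).

Lemma uex A : U A -> exists k, A k.
Proof.
  intros H. apply NNPP. intros Hn. apply (u0 _ HU). apply (uS _ HU A); auto.
  intros k Ak. apply Hn. eauto.
Qed.

Lemma uexN A N : U A -> exists k, (N <= k)%nat /\ A k.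
Proof. intros H. apply uex. apply (uI _ HU); auto. apply (uN _ HU). Qed.

Lemma uT : U (fun _ => True).
Proof. apply (uS _ HU (fun k => (0 <= k)%nat)); auto. apply (uN _ HU). Qed.

Lemma unot A : U A -> ~ U (fun k => ~ A k).
Proof.
  intros H1 H2. apply (u0 _ HU). apply (uS _ HU _ _ (fun k (h : A k /\ ~ A k) => proj2 h (proj1 h))).
  apply (uI _ HU); auto.
Qed.

Lemma ulimR_ex (u : nat -> R) B : (forall k, Rabs (u k) <= B) ->
  exists l, forall eps, 0 < eps -> U (fun k => Rabs (u k - l) < eps).
Proof.
  intros Hb.
  set (E := fun r => U (fun k => r <= u k)).
  assert (Eb : bound E).
  { exists B. intros r Er. destruct (Rle_dec r B) as [|Hn]; auto. exfalso.
    destruct (uex _ Er) as [k Hk]. specialize (Hb k). apply abs_le_b in Hb. lra. }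
  assert (Ene : exists r, E r).
  { exists (-B). unfold E. apply (uS _ HU (fun _ => True)); [|apply uT].
    intros k _. specialize (Hb k). apply abs_le_b in Hb. lra. }
  destruct (completeness E Eb Ene) as [m [Hub Hlub]].
  exists m. intros eps He.
  assert (H1 : U (fun k => m - eps / 2 <= u k)).
  { apply NNPP. intros Hn.
    assert (m <= m - eps / 2). { apply Hlub. intros r Er. destruct (Rle_dec r (m - eps/2)) as [|Hr]; auto.
      exfalso. apply Hn. apply (uS _ HU _ _ (fun k (h : r <= u k) => Rle_trans _ _ _ (Rlt_le _ _ (Rnot_le_lt _ _ Hr)) h)). exact Er. }
    lra. }
  assert (H2 : U (fun k => ~ (m + eps / 2 <= u k))).
  { destruct (uC _ HU (fun k => m + eps / 2 <= u k)) as [H|H]; auto.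
    exfalso. assert (m + eps / 2 <= m) by (apply Hub; exact H). lra. }
  apply (uS _ HU (fun k => m - eps / 2 <= u k /\ ~ (m + eps / 2 <= u k))).
  { intros k [h1 h2]. apply Rnot_le_lt in h2. apply Rabs_def1; lra. }
  apply (uI _ HU); auto.
Qed.

Lemma unot_list {I : Type} (A : I -> nat -> Prop) (l : list I) :
  (forall i, In i l -> ~ U (A i)) -> ~ U (fun k => exists i, In i l /\ A i k).
Proof.
  induction l as [|i l IH]; intros Hl HUl.
  - apply (u0 _ HU). apply (uS _ HU (fun k => exists i, In i nil /\ A i k)); [|exact HUl].
    intros k [i0 [[] _]].
  - assert (Hi : ~ U (A i)) by (apply Hl; left; auto).
    assert (Hr : ~ U (fun k => exists i, In i l /\ A i k)) by (apply IH; intros; apply Hl; right; auto).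
    destruct (uC _ HU (A i)) as [|C1]; [tauto|]. 
    destruct (uC _ HU (fun k => exists i, In i l /\ A i k)) as [|C2]; [tauto|].
    apply (u0 _ HU). apply (uS _ HU (fun k => ((~ A i k) /\ ~ (exists i, In i l /\ A i k)) /\ exists j, In j (i :: l) /\ A j k)).
    + intros k [[N1 N2] [j [[<-|Hj] Aj]]]; [tauto|]. apply N2; eauto.
    + apply (uI _ HU); auto. apply (uI _ HU); auto.
Qed.
End UF.

Section Lim.
Context {X : Type} (d : X -> X -> R) (Hm : is_metric d).
Context (U : (nat -> Prop) -> Prop) (HU : isUF U).

Lemma ulimX_ex (K : X -> Prop) (u : nat -> X) : is_compact d K -> (forall k, K (u k)) ->
  exists l, forall eps, 0 < eps -> U (fun k => d (u k) l < eps).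
Proof.
  intros HK Hu. apply NNPP. intros Hn.
  assert (Hn' : forall l, exists e, 0 < e /\ ~ U (fun k => d (u k) l < e)).
  { intros l. apply NNPP. intros H. apply Hn. exists l. intros eps He. apply NNPP. intros H'. apply H. eauto. }
  set (I := {l : X & {e : R | 0 < e /\ ~ U (fun k => d (u k) l < e)}}).
  set (Ui := fun (i : I) x => d (projT1 i) x < proj1_sig (projT2 i)).
  destruct (HK I Ui) as [l Hl].
  - intros i x Hx. exists (proj1_sig (projT2 i) - d (projT1 i) x). split.
    + unfold Ui in Hx. lra.
    + intros y Hy. unfold Ui in *. pose proof (dtri d Hm (projT1 i) x y). lra.
  - intros x Kx. destruct (Hn' x) as [e [He Hne]].
    exists (existT _ x (exist _ e (conj He Hne))). unfold Ui; simpl. rewrite dxx; auto.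
  - apply (unot_list U HU (fun i k => Ui i (u k)) l).
    + intros [x [e [He Hne]]] _ HH. apply Hne. revert HH. apply (uS _ HU). intros k h. unfold Ui in h; simpl in h. rewrite (dsym d Hm). exact h.
    + apply (uS _ HU (fun _ => True)); [|apply uT; auto]. intros k _. apply Hl. apply Hu.
Qed.

Lemma banach (Hc : complete d) (F : X -> X) (lam : R) (x0 : X) :
  0 <= lam < 1 -> (forall x y, d (F x) (F y) <= lam * d x y) -> exists y, F y = y.
Proof.
  intros Hl HF.
  set (it := fun n => Nat.iter n F x0).
  set (d0 := d x0 (F x0)).
  assert (Hd0 : 0 <= d0) by apply (dpos d Hm).
  assert (B1 : forall m, d x0 (it m) <= d0 / (1 - lam)).
  { induction m as [|m IH].
    - simpl. rewrite (dxx d Hm). unfold Rdiv; apply Rmult_le_pos; [lra|]; apply Rlt_le, Rinv_0_lt_compat; lra.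
    - simpl. pose proof (dtri d Hm x0 (F x0) (F (it m))). pose proof (HF x0 (it m)).
      apply Rle_trans with (d0 + lam * (d0 / (1 - lam))).
      + fold d0 in H. assert (lam * d x0 (it m) <= lam * (d0 / (1 - lam))) by (apply Rmult_le_compat_l; lra). lra.
      + right. field. lra. }
  assert (B2 : forall n m, d (it n) (it (n + m)%nat) <= lam ^ n * d x0 (it m)).
  { induction n as [|n IH]; intros m.
    - simpl. lra.
    - simpl. eapply Rle_trans. apply HF. rewrite Rmult_assoc. apply Rmult_le_compat_l; [lra|]. apply IH. }
  assert (Cy : cauchy_seq d it).
  { intros eps He.
    destruct (pow_lt_1_zero lam ltac:(rewrite Rabs_right; lra) (eps * (1 - lam) / (d0 + 1))) as [N HN].
    { apply Rdiv_lt_0_compat; nra. }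
    exists N.
    assert (K : forall n m, (N <= n)%nat -> d (it n) (it (n + m)%nat) < eps).
    { intros n m Hn. eapply Rle_lt_trans. apply B2.
      specialize (HN n Hn). rewrite Rabs_right in HN by (apply Rle_ge, pow_le; lra).
      pose proof (pow_le lam n ltac:(lra)).
      apply Rle_lt_trans with (lam ^ n * (d0 / (1 - lam))). apply Rmult_le_compat_l; auto.
      apply Rmult_lt_reg_r with ((1 - lam) / (d0 + 1)). apply Rdiv_lt_0_compat; lra.
      replace (lam ^ n * (d0 / (1 - lam)) * ((1 - lam) / (d0 + 1))) with (lam ^ n * (d0 / (d0 + 1))) by (field; lra).
      replace (eps * ((1 - lam) / (d0 + 1))) with (eps * (1 - lam) / (d0 + 1)) by (field; lra).
      apply Rle_lt_trans with (lam ^ n); auto.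
      rewrite <- (Rmult_1_r (lam ^ n)) at 2. apply Rmult_le_compat_l; auto.
      apply Rmult_le_reg_r with (d0 + 1). lra. unfold Rdiv. rewrite Rmult_assoc, Rinv_l by lra. lra. }
    intros m n Hm' Hn'. destruct (Nat.le_ge_cases m n) as [Hmn|Hmn].
    - replace n with (m + (n - m))%nat by lia. apply K; auto.
    - rewrite (dsym d Hm). replace m with (n + (m - n))%nat by lia. apply K; auto. }
  destruct (Hc it Cy) as [l Hlim]. exists l.
  apply (d0eq d Hm). apply NNPP. intros Hne.
  assert (Hp : 0 < d (F l) l) by (pose proof (dpos d Hm (F l) l); lra).
  destruct (Hlim (d (F l) l / 3)) as [N HN]. lra.
  pose proof (HN N (le_n _)). pose proof (HN (S N) (le_S _ _ (le_n _))).
  pose proof (dtri d Hm (F l) (it (S N)) l). pose proof (HF l (it N)).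
  assert (it (S N) = F (it N)) by reflexivity. rewrite H3 in *.
  rewrite (dsym d Hm l (it N)) in H2.
  assert (lam * d (it N) l <= d (it N) l) by (pose proof (dpos d Hm (it N) l); nra).
  lra.
Qed.
End Lim.

Lemma eq_by_eps x y : (forall eps, 0 < eps -> Rabs (x - y) <= eps) -> x = y.
Proof.
  intros H. destruct (Req_dec x y) as [|Hn]; auto. exfalso.
  assert (0 < Rabs (x - y)) by (apply Rabs_pos_lt; lra).
  specialize (H (Rabs (x - y) / 2) ltac:(lra)). lra.
Qed.

Lemma le_by_eps x y : (forall eps, 0 < eps -> x <= y + eps) -> x <= y.
Proof.
  intros H. destruct (Rle_dec x y) as [|Hn]; auto. exfalso.
  specialize (H ((x - y) / 2) ltac:(lra)). lra.
Qed.

Lemma abs_lt_b x b : Rabs x < b -> -b < x < b.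
Proof. unfold Rabs; destruct (Rcase_abs x); lra. Qed.

Section Main.
Context {X : Type} (d : X -> X -> R) (Hm : is_metric d) (HC : CAT0 d) (Hc : complete d).
Context (x0 : X) (T : X -> X) (HT : is_isometry d T).

Definition geo x y := epsilon (inhabits (fun _ : R => x)) (is_geodesic d x y).
Lemma geo_spec x y : is_geodesic d x y (geo x y).
Proof. unfold geo. apply epsilon_spec. apply (proj1 HC). Qed.

Definition lam (k : nat) := INR k / INR (S k).
Lemma lam_bounds k : 0 <= lam k < 1.
Proof.
  unfold lam. rewrite S_INR. pose proof (pos_INR k). split.
  - apply Rmult_le_pos; auto. apply Rlt_le, Rinv_0_lt_compat; lra.
  - apply Rmult_lt_reg_r with (INR k + 1); [lra|]. unfold Rdiv. rewrite Rmult_assoc, Rinv_l by lra. lra.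
Qed.
Lemma one_m_lam k : (1 - lam k) * INR (S k) = 1.
Proof. unfold lam. rewrite S_INR. pose proof (pos_INR k). field. lra. Qed.

Definition Fk k x := geo x0 (T x) (lam k * d x0 (T x)).

Lemma HTd x y : d (T x) (T y) = d x y.
Proof. apply (proj1 HT). Qed.

Lemma Fk_contr k x y : d (Fk k x) (Fk k y) <= lam k * d x y.
Proof.
  unfold Fk. rewrite <- (HTd x y). pose proof (lam_bounds k).
  apply (convex d Hm HC x0 (T x) (T y)); auto using geo_spec. lra.
Qed.

Definition yk k := epsilon (inhabits x0) (fun y => Fk k y = y).
Lemma yk_spec k : Fk k (yk k) = yk k.
Proof.
  unfold yk. apply epsilon_spec. apply (banach d Hm Hc (Fk k) (lam k) x0).
  apply lam_bounds. apply Fk_contr.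
Qed.

Definition Lk k := d x0 (T (yk k)).
Definition ck k := geo x0 (T (yk k)).
Lemma ck_geo k : is_geodesic d x0 (T (yk k)) (ck k).
Proof. apply geo_spec. Qed.
Lemma yk_eq k : ck k (lam k * Lk k) = yk k.
Proof. apply yk_spec. Qed.

Definition D := d x0 (T x0).

Lemma dx0yk k : d x0 (yk k) = lam k * Lk k.
Proof.
  rewrite <- yk_eq at 1. pose proof (lam_bounds k). pose proof (dpos d Hm x0 (T (yk k))).
  apply (geo_dist d _ _ _ _ (ck_geo k)). unfold Lk in *. nra.
Qed.

Lemma delta_eq k : d (yk k) (T (yk k)) * INR (S k) = Lk k.
Proof.
  pose proof (lam_bounds k). pose proof (dpos d Hm x0 (T (yk k))). fold (Lk k) in H0.
  destruct (ck_geo k) as [G0 [G1 G2]].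
  rewrite <- yk_eq at 1. rewrite <- G1 at 1. fold (Lk k).
  rewrite G2 by (unfold Lk in *; nra). rewrite Rabs_left1 by (unfold Lk in *; nra).
  replace (- (lam k * Lk k - Lk k)) with ((1 - lam k) * Lk k) by ring.
  rewrite Rmult_comm, <- Rmult_assoc, (Rmult_comm _ (1 - lam k)), one_m_lam. ring.
Qed.

Lemma delta_le_D k : d (yk k) (T (yk k)) <= D.
Proof.
  pose proof (lam_bounds k). pose proof (delta_eq k).
  pose proof (dtri d Hm x0 (T x0) (T (yk k))). rewrite HTd, dx0yk in H1. fold (Lk k) D in H1.
  assert ((1 - lam k) * Lk k <= D) by lra.
  assert (INR (S k) > 0) by (apply lt_0_INR; lia).
  assert (d (yk k) (T (yk k)) = (1 - lam k) * Lk k).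
  { apply Rmult_eq_reg_r with (INR (S k)); [|lra]. rewrite H0.
    rewrite Rmult_comm, <- Rmult_assoc, (Rmult_comm _ (1 - lam k)), one_m_lam. ring. }
  lra.
Qed.

Lemma delta_val k : d (yk k) (T (yk k)) = Lk k - lam k * Lk k.
Proof.
  pose proof (delta_eq k). pose proof (one_m_lam k).
  assert (INR (S k) > 0) by (apply lt_0_INR; lia).
  apply Rmult_eq_reg_r with (INR (S k)); [|lra]. rewrite H.
  replace ((Lk k - lam k * Lk k) * INR (S k)) with (Lk k * ((1 - lam k) * INR (S k))) by ring.
  rewrite H0. ring.
Qed.

Lemma ebound k z : Rabs (hfun d x0 (T (yk k)) z - hfun d x0 (yk k) z) * INR (S k) <= 4 * d z x0 + D.
Proof.
  unfold hfun.
  pose proof (delta_val k) as Dv. pose proof (delta_eq k) as De. pose proof (delta_le_D k) as DD.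
  pose proof (dx0yk k) as Dy. pose proof (lam_bounds k) as Hl.
  assert (Hn : INR (S k) > 0) by (apply lt_0_INR; lia).
  set (y := yk k) in *. set (q := T y) in *. set (n := INR (S k)) in *.
  assert (EL : d x0 q = Lk k) by reflexivity.
  set (L := Lk k) in *. set (dl := d y q) in *.
  set (a := d z x0). set (w := d z y). set (b := d z q).
  assert (Ha : 0 <= a) by apply (dpos d Hm).
  assert (H1 : b <= w + dl) by apply (dtri d Hm).
  assert (H2 : w <= b + dl) by (unfold w, b, dl; rewrite (dsym d Hm y q); apply (dtri d Hm)).
  assert (Hd0 : 0 <= dl) by apply (dpos d Hm).
  replace (b - d x0 q - (w - d x0 y)) with (- (dl + w - b)) by (rewrite EL, Dy, Dv; ring).
  rewrite Rabs_Ropp, Rabs_right by lra.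
  destruct (Req_dec dl 0) as [E0|E0].
  { rewrite E0 in *. assert (dl + w - b = 0) by lra. unfold D. pose proof (dpos d Hm x0 (T x0)). nra. }
  assert (HL : 0 < L) by nra.
  destruct (Rle_dec dl (2 * (L - a))) as [Hr|Hr].
  - pose proof (e_lemma d Hm HC x0 q (ck k) z dl (ck_geo k)) as He.
    rewrite EL in He. fold a b in He.
    replace (L - dl) with (lam k * L) in He by lra. unfold L in He. rewrite yk_eq in He. fold y L w in He.
    assert (0 <= lam k * L) by nra. specialize (He HL ltac:(lra) Hr).
    assert (dl * (2 * (dl + w - b) * n) <= dl * (4 * a + 2 * dl)).
    { eapply Rle_trans; [|exact He]. rewrite <- De. nra. }
    apply Rmult_le_reg_l in H0; [|lra]. lra.
  - assert ((dl + w - b) * n <= 2 * dl * n) by (apply Rmult_le_compat_r; lra). lra.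
Qed.

Section P1.
Context (U : (nat -> Prop) -> Prop) (HU : isUF U).

Definition hU z := epsilon (inhabits 0) (fun l => forall eps, 0 < eps ->
   U (fun k => Rabs (hfun d x0 (yk k) z - l) < eps)).

Lemma hfun_bound y z : Rabs (hfun d x0 y z) <= d z x0.
Proof.
  unfold hfun. pose proof (dtri d Hm z x0 y). pose proof (dtri d Hm x0 z y).
  rewrite (dsym d Hm x0 z) in H0. apply Rabs_le. lra.
Qed.

Lemma hU_spec z eps : 0 < eps -> U (fun k => Rabs (hfun d x0 (yk k) z - hU z) < eps).
Proof.
  revert eps. unfold hU. apply epsilon_spec.
  apply (ulimR_ex U HU _ (d z x0)). intros k. apply hfun_bound.
Qed.

Lemma hU_list (F : list X) eps : 0 < eps ->
  U (fun k => forall x, In x F -> Rabs (hU x - hfun d x0 (yk k) x) < eps).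
Proof.
  intros He. induction F as [|x F IH].
  - apply (uS _ HU (fun _ => True)); [|apply uT; auto]. intros k _ x [].
  - apply (uS _ HU (fun k => Rabs (hfun d x0 (yk k) x - hU x) < eps /\
        forall x, In x F -> Rabs (hU x - hfun d x0 (yk k) x) < eps)).
    + intros k [A B] x' [<-|Hx]; auto. rewrite Rabs_minus_sym. auto.
    + apply (uI _ HU); auto. apply hU_spec; auto.
Qed.

Lemma part1 : exists h, in_metric_compactification d x0 h /\ act x0 T h = h.
Proof.
  exists hU. split; [split|].
  - intros x y. apply le_by_eps. intros eps He.
    destruct (uex U HU _ (uI _ HU _ _ (hU_spec x (eps/2) ltac:(lra)) (hU_spec y (eps/2) ltac:(lra)))) as [k [A B]].
    unfold hfun in *. pose proof (dtri d Hm x y (yk k)). pose proof (dtri d Hm y x (yk k)).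
    rewrite (dsym d Hm y x) in H0.
    apply abs_lt_b in A. apply abs_lt_b in B. apply Rabs_le. lra.
  - intros F eps He. destruct (uex U HU _ (hU_list F eps He)) as [k Hk]. exists (yk k). auto.
  - apply functional_extensionality. intros z. unfold act.
    set (z' := finv T z). set (x0' := finv T x0).
    assert (Ez : T z' = z) by (unfold z', finv; apply epsilon_spec; apply (proj2 HT)).
    assert (Ex : T x0' = x0) by (unfold x0', finv; apply epsilon_spec; apply (proj2 HT)).
    apply eq_by_eps. intros eps He.
    pose proof (Rplus_le_le_0_compat _ _ (dpos d Hm z x0) (dpos d Hm x0 (T x0))).
    destruct (INR_unbounded ((4 * d z x0 + D) * 4 / eps)) as [N HN].
    pose proof (uI _ HU _ _ (hU_spec z' (eps/4) ltac:(lra)) (uI _ HU _ _ (hU_spec x0' (eps/4) ltac:(lra))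
       (uI _ HU _ _ (hU_spec z (eps/4) ltac:(lra)) (uN _ HU N)))) as HH.
    destruct (uex U HU _ HH) as [k [A1 [A2 [A3 A4]]]]. cbv beta in A1, A2, A3, A4.
    pose proof (ebound k z) as Eb.
    assert (Hk : INR N < INR (S k)) by (apply lt_INR; lia).
    assert (Hb : Rabs (hfun d x0 (T (yk k)) z - hfun d x0 (yk k) z) < eps / 4).
    { apply Rmult_lt_reg_r with (INR (S k)). apply lt_0_INR; lia.
      eapply Rle_lt_trans. exact Eb.
      set (K := (4 * d z x0 + D) * 4 / eps) in *.
      assert (K * eps = (4 * d z x0 + D) * 4) by (unfold K; field; lra).
      assert (K * eps < INR (S k) * eps) by (apply Rmult_lt_compat_r; lra).
      lra. }
    assert (Ek : hfun d x0 (yk k) z' - hfun d x0 (yk k) x0' = hfun d x0 (T (yk k)) z).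
    { unfold hfun. assert (E1 : d z (T (yk k)) = d z' (yk k)) by (rewrite <- Ez; apply HTd). assert (E2 : d x0 (T (yk k)) = d x0' (yk k)) by (rewrite <- Ex at 1; apply HTd). rewrite E1, E2. ring. }
    apply abs_lt_b in A1. apply abs_lt_b in A2. apply abs_lt_b in A3. apply abs_lt_b in Hb.
    apply Rabs_le. lra.
Qed.
End P1.

Lemma disp k t : 0 < Lk k -> 0 <= t <= lam k * Lk k ->
  d (ck k t) (T (ck k t)) <= D + t / INR (S k).
Proof.
  intros HL Ht. pose proof (lam_bounds k) as Hl. pose proof (one_m_lam k) as Ol.
  assert (Hn : INR (S k) > 0) by (apply lt_0_INR; lia).
  pose proof (ck_geo k) as G. pose proof (dx0yk k) as Dy.
  set (c := ck k) in *. set (y := yk k) in *. set (L := Lk k) in *.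
  assert (EL : d x0 (T y) = L) by reflexivity.
  pose proof (rev_geo d Hm _ _ _ G) as RG.
  assert (HlL : 0 <= lam k * L <= d x0 (T y)) by (rewrite EL; nra).
  pose proof (restrict_geo d _ _ _ _ G HlL) as RS. unfold c, L in RS. rewrite yk_eq in RS. fold c y in RS.
  pose proof (rev_geo d Hm _ _ _ RS) as RR.
  pose proof (iso_geo d T _ _ _ HTd RR) as IG.
  set (al := (L - t) / L).
  assert (Hal : 0 <= al <= 1).
  { unfold al. split. apply Rmult_le_pos; [nra|]. apply Rlt_le, Rinv_0_lt_compat; lra.
    apply Rmult_le_reg_r with L; auto. unfold Rdiv. rewrite Rmult_assoc, Rinv_l by lra. nra. }
  pose proof (convex d Hm HC (T y) x0 (T x0) _ _ al RG IG Hal) as CV.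
  rewrite (dsym d Hm (T y) x0), EL, HTd, (dsym d Hm y x0), Dy in CV.
  replace (L - al * L) with t in CV by (unfold al; field; lra).
  replace (lam k * L - al * (lam k * L)) with (lam k * t) in CV by (unfold al; field; lra).
  fold D in CV.
  pose proof (dtri d Hm (c t) (T (c (lam k * t))) (T (c t))) as Tr.
  rewrite HTd in Tr. destruct G as [_ [_ G2]].
  rewrite G2 in Tr by (rewrite EL; nra).
  rewrite Rabs_left1 in Tr by nra.
  assert (E : - (lam k * t - t) = t / INR (S k)).
  { apply Rmult_eq_reg_r with (INR (S k)); [|lra]. unfold Rdiv. rewrite Rmult_assoc, Rinv_l by lra.
    replace (- (lam k * t - t) * INR (S k)) with (t * ((1 - lam k) * INR (S k))) by ring. rewrite Ol. ring. }
  rewrite E in Tr.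
  assert (al * D <= D) by (unfold D; pose proof (dpos d Hm x0 (T x0)); nra).
  lra.
Qed.

Section P2.
Context (U : (nat -> Prop) -> Prop) (HU : isUF U) (Hp : proper d).

Lemma ball_compact M : is_compact d (fun y => d x0 y <= M).
Proof.
  apply Hp.
  - intros x Hx. exists (d x0 x - M). split. lra.
    intros y Hy Hy'. pose proof (dtri d Hm x0 y x). rewrite (dsym d Hm y x) in H. lra.
  - exists x0, M. auto.
Qed.

Lemma Lk_pos k : 0 <= Lk k.
Proof. apply (dpos d Hm). Qed.

Lemma ck_dist k s : 0 <= s <= Lk k -> d x0 (ck k s) = s.
Proof. intros. apply (geo_dist d _ _ _ _ (ck_geo k)). auto. Qed.

Lemma part2 : fixes_visual_point d T.
Proof.
  destruct (classic (exists M, U (fun k => Lk k <= M))) as [[M HM]|HnM].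
  - left.
    assert (HM0 : 0 <= M) by (destruct (uex U HU _ HM) as [k Hk]; pose proof (Lk_pos k); lra).
    set (u := fun k => if Rle_dec (Lk k) M then yk k else x0).
    destruct (ulimX_ex d Hm U HU (fun y => d x0 y <= M) u (ball_compact M)) as [ys Hys].
    { intros k. unfold u. destruct (Rle_dec (Lk k) M).
      - rewrite dx0yk. pose proof (lam_bounds k). pose proof (Lk_pos k). nra.
      - rewrite (dxx d Hm). auto. }
    exists ys. apply (d0eq d Hm). apply Rle_antisym; [|apply (dpos d Hm)].
    apply le_by_eps. intros eps He.
    destruct (INR_unbounded (3 * M / eps)) as [N HN].
    destruct (uex U HU _ (uI _ HU _ _ (Hys (eps/3) ltac:(lra)) (uI _ HU _ _ HM (uN _ HU N))))
      as [k [A1 [A2 A3]]]. cbv beta in A1, A2, A3.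
    unfold u in A1. destruct (Rle_dec (Lk k) M); [|tauto].
    pose proof (delta_eq k). 
    assert (Hk : INR N < INR (S k)) by (apply lt_INR; lia).
    assert (Hd : d (yk k) (T (yk k)) < eps / 3).
    { assert (3 * M / eps * eps = 3 * M) by (field; lra).
      assert (3 * M / eps * eps < INR (S k) * eps) by (apply Rmult_lt_compat_r; lra).
      assert (d (yk k) (T (yk k)) * INR (S k) < eps / 3 * INR (S k)) by lra.
      apply Rmult_lt_reg_r in H2; auto. apply lt_0_INR; lia. }
    pose proof (dtri d Hm (T ys) (T (yk k)) ys). pose proof (dtri d Hm (T (yk k)) (yk k) ys).
    rewrite HTd, (dsym d Hm ys (yk k)) in H0. rewrite (dsym d Hm (T (yk k)) (yk k)) in H1. lra.
  - right.
    assert (HnM' : forall M, U (fun k => ~ Lk k <= M)).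
    { intros M. destruct (uC _ HU (fun k => Lk k <= M)); auto. exfalso; eauto. }
    set (g := fun t => epsilon (inhabits x0) (fun l => forall eps, 0 < eps ->
                U (fun k => d (ck k (Rmin t (Lk k))) l < eps))).
    assert (Hg : forall t, 0 <= t -> forall eps, 0 < eps ->
                U (fun k => d (ck k (Rmin t (Lk k))) (g t) < eps)).
    { intros t Ht. unfold g. apply epsilon_spec.
      apply (ulimX_ex d Hm U HU (fun y => d x0 y <= t)). apply ball_compact.
      intros k. pose proof (Lk_pos k). rewrite ck_dist.
      apply Rmin_l. split. apply Rmin_glb; auto. apply Rmin_r. }
    exists g. split.
    + intros s t Hs Ht. apply eq_by_eps. intros eps He.
      destruct (uex U HU _ (uI _ HU _ _ (Hg s Hs (eps/2) ltac:(lra)) (uI _ HU _ _ (Hg t Ht (eps/2) ltac:(lra)) (HnM' (s + t)))))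
        as [k [A1 [A2 A3]]]. cbv beta in A1, A2, A3.
      rewrite !Rmin_left in A1, A2 by lra.
      destruct (ck_geo k) as [_ [_ G2]]. pose proof (G2 s t ltac:(fold (Lk k); lra) ltac:(fold (Lk k); lra)) as Est.
      set (cs := ck k s) in *. set (ct := ck k t) in *.
      pose proof (dtri d Hm (g s) cs (g t)). pose proof (dtri d Hm cs ct (g t)).
      pose proof (dtri d Hm cs (g s) ct). pose proof (dtri d Hm (g s) (g t) ct).
      rewrite (dsym d Hm (g s) cs) in *. rewrite (dsym d Hm (g t) ct) in *.
      apply Rabs_le. lra.
    + exists D. intros t Ht. apply le_by_eps. intros eps He.
      destruct (INR_unbounded (3 * t / eps)) as [N HN].
      destruct (uex U HU _ (uI _ HU _ _ (Hg t Ht (eps/3) ltac:(lra)) (uI _ HU _ _ (HnM' (2 * t)) (uN _ HU (S N)))))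
        as [k [A1 [A2 A3]]]. cbv beta in A1, A2, A3.
      rewrite Rmin_left in A1 by lra.
      assert (Hn : INR (S k) > 0) by (apply lt_0_INR; lia).
      assert (Hk : INR N < INR (S k)) by (apply lt_INR; lia).
      assert (Hl2 : lam k >= 1 / 2).
      { unfold lam. rewrite S_INR. assert (1 <= INR k) by (apply (le_INR 1); lia).
        apply Rle_ge. apply Rmult_le_reg_r with (2 * (INR k + 1)). lra.
        unfold Rdiv. replace (INR k * / (INR k + 1) * (2 * (INR k + 1))) with (2 * INR k) by (field; lra). lra. }
      assert (HL : 0 < Lk k) by lra.
      assert (Htl : 0 <= t <= lam k * Lk k) by nra.
      pose proof (disp k t HL Htl) as Dp.
      assert (Htn : t / INR (S k) < eps / 3).
      { apply Rmult_lt_reg_r with (INR (S k)); auto. unfold Rdiv at 1. rewrite Rmult_assoc, Rinv_l by lra.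
        assert (3 * t / eps * eps = 3 * t) by (field; lra).
        assert (3 * t / eps * eps < INR (S k) * eps) by (apply Rmult_lt_compat_r; lra). lra. }
      pose proof (dtri d Hm (T (g t)) (T (ck k t)) (g t)). pose proof (dtri d Hm (T (ck k t)) (ck k t) (g t)).
      rewrite HTd, (dsym d Hm (g t) (ck k t)) in H. rewrite (dsym d Hm (T (ck k t)) (ck k t)) in H0. lra.
Qed.
End P2.
End Main.

Module UFM.
From mathcomp Require Import all_boot.
From mathcomp Require Import classical_sets boolp filter.
Lemma ultra_nat : exists U : (nat -> Prop) -> Prop,
 (forall A B, U A -> U B -> U (fun k => A k /\ B k)) /\
 (forall A B : nat -> Prop, (forall k, A k -> B k) -> U A -> U B) /\
 ~ U (fun _ => False) /\
 (forall A, U A \/ U (fun k => ~ A k)) /\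
 (forall N, U (fun k => (N <= k)%coq_nat)).
Proof.
have [G [GU sFG]] := ultraFilterLemma (@eventually_filter).
exists G; split; [|split; [|split; [|split]]].
- move=> A B HA HB. exact: (filterI HA HB).
- move=> A B AB HA. exact: (filterS AB HA).
- move=> H0. exact: (@filter_not_empty _ G _ H0).
- move=> A. exact: in_ultra_setVsetC.
- move=> N. apply: sFG. exists N => // k /= Hk. by apply/leP.
Qed.
End UFM.

Theorem corollary5 (X : Type) (d : X -> X -> R) (x0 : X) :
  is_metric d -> complete d -> CAT0 d ->
  (forall T : X -> X, is_isometry d T ->
     exists h : X -> R, in_metric_compactification d x0 h /\ act x0 T h = h) /\
  (proper d -> forall T : X -> X, is_isometry d T -> fixes_visual_point d T).
Proof.
  intros Hm Hc HC.
  destruct UFM.ultra_nat as [U [H1 [H2 [H3 [H4 H5]]]]].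
  assert (HU : isUF U) by (constructor; auto).
  split.
  - intros T HT. exact (part1 d Hm HC Hc x0 T HT U HU).
  - intros Hp T HT. exact (part2 d Hm HC Hc x0 T HT U HU Hp).
Qed.
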